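(* Let $I(z)$ be a nonzero polynomial solution of the KZ system over $\mathbb{F}_p$ and let $C z_1^{d_1}\cdots z_n^{d_n}$, $C=(C_1,\dots,C_n)\in\mathbb{F}_p^n$, be its $\mathrm{id}$-leading term. Then, with $C$ as a column vector and equalities in $\mathbb{F}_p$, $$\sum_{j=1}^nm_jC_j=0,\qquad \sum_{l=j+1}^n\Omega_{jl}C=q\,d_j\,C\ \ (j=1,\dots,n-1),\qquad d_n\equiv0\pmod p.$$
   Context: Let $p,q$ be primes and $n$ a positive integer with $p>n\ge2$, $p>q$. Fix positive integers $m_1,\dots,m_n<q$. For $i\ne j$ let $\Omega_{ij}$ be the $n\times n$ matrix whose only nonzero entries are $(\Omega_{ij})_{ii}=-m_j$, $(\Omega_{ij})_{ij}=m_j$, $(\Omega_{ij})_{ji}=m_i$, $(\Omega_{ij})_{jj}=-m_i$. A polynomial solution of the KZ system over $\mathbb{F}_p$ is $I(z)=(I_1,\dots,I_n)\in\mathbb{F}_p[z_1,\dots,z_n]^n$ with $\partial I/\partial z_i=q^{-1}\sum_{j\ne i}\Omega_{ij}I/(z_i-z_j)$ for all $i$ and $\sum_im_iI_i=0$ (computed in $\mathbb{F}_p$). Monomials $z^d$ are ordered lexicographically by $(d_1,\dots,d_n)$ (so $z_1>\dots>z_n$); the $\mathrm{id}$-leading term of a nonzero $f\in\mathbb{F}_p[z]^n$ is $a z^d$ with $z^d$ the largest monomial having nonzero coefficient $a\in\mathbb{F}_p^n$. *)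

(* Defs.v *)
From HB Require Import structures.
From mathcomp Require Import all_boot all_algebra.
From mathcomp Require Import fraction.
From mathcomp Require Import mpoly.
Set Implicit Arguments. Unset Strict Implicit. Unset Printing Implicit Defensive.
Import GRing.Theory.
Local Open Scope ring_scope.

Definition Omega (p n : nat) (m : 'I_n -> nat) (i j : 'I_n) : 'M['F_p]_n :=
  \matrix_(a < n, b < n)
    (if (a == i) && (b == i) then - (m j)%:R
     else if (a == i) && (b == j) then (m j)%:R
     else if (a == j) && (b == i) then (m i)%:R
     else if (a == j) && (b == j) then - (m i)%:R
     else 0).

Definition mx_act (p n : nat) (A : 'M['F_p]_n) (I : 'I_n -> {mpoly 'F_p[n]})
  : 'I_n -> {mpoly 'F_p[n]} :=
  fun k => \sum_(l < n) A k l *: I l.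

Notation tofrac := (@FracField.tofrac _).

Definition is_KZ_solution (p q n : nat) (m : 'I_n -> nat)
  (I : 'I_n -> {mpoly 'F_p[n]}) : Prop :=
  (forall (i k : 'I_n),
     tofrac (mderiv i (I k)) =
       (q%:R)^-1 * \sum_(j < n | j != i)
          tofrac (mx_act (Omega p m i j) I k) / tofrac ('X_i - 'X_j))
  /\ \sum_(i < n) (m i)%:R *: I i = 0.

(* lexicographic (non-strict) order on exponent sequences, z_1 > ... > z_n *)
Fixpoint lexle (s t : seq nat) : bool :=
  match s, t with
  | x :: s', y :: t' => (x < y)%N || ((x == y) && lexle s' t')
  | _, _ => true
  end.

Definition mlexle (n : nat) (d e : 'X_{1..n}) : bool :=
  lexle (val (val d)) (val (val e)).

Definition is_id_leading_term (p n : nat) (I : 'I_n -> {mpoly 'F_p[n]})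
  (C : 'cV['F_p]_n) (d : 'X_{1..n}) : Prop :=
  C != 0 /\ (forall k, C k 0 = (I k)@_d) /\
  (forall (e : 'X_{1..n}) (k : 'I_n), (I k)@_e != 0 -> mlexle e d).

(* Main.v *)
Require Import Defs.
From HB Require Import structures.
From mathcomp Require Import all_boot all_algebra.
From mathcomp Require Import fraction.
From mathcomp Require Import mpoly.
From mathcomp Require Import ring.
Import GRing.Theory.

Fixpoint addseq (s t : seq nat) : seq nat :=
  match s, t with x :: s', y :: t' => (x + y)%N :: addseq s' t' | _, _ => [::] end.

Lemma lexle_refl s : lexle s s.
Proof. by elim: s => //= x s ->; rewrite eqxx orbT. Qed.

Lemma lexle_trans s t u : size s = size t -> size t = size u ->
  lexle s t -> lexle t u -> lexle s u.
Proof.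
elim: s t u => [|x s IH] [|y t] [|z u] //= [Hst] [Htu].
case/orP=> [Hxy|/andP[/eqP <- H1]]; case/orP=> [Hyz|/andP[/eqP <- H2]].
- by rewrite (ltn_trans Hxy Hyz).
- by rewrite Hxy.
- by rewrite Hyz.
- by rewrite eqxx (IH t u) // orbT.
Qed.

Lemma lexle_anti s t : size s = size t -> lexle s t -> lexle t s -> s = t.
Proof.
elim: s t => [|x s IH] [|y t] //= [Hst].
case/orP=> [Hxy|/andP[/eqP <- H1]]; case/orP=> [Hyx|/andP[/eqP Hyx H2]].
- by move: (ltn_trans Hxy Hyx); rewrite ltnn.
- by move: Hxy; rewrite Hyx ltnn.
- by move: Hyx; rewrite ltnn.
- by rewrite (IH t).
Qed.

Lemma lexle_add s t u : size s = size u -> size t = size u ->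
  lexle s t -> lexle (addseq s u) (addseq t u).
Proof.
elim: s t u => [|x s IH] [|y t] [|z u] //= [Hs] [Ht].
case/orP=> [Hxy|/andP[/eqP <- H1]].
- by rewrite ltn_add2r Hxy.
- by rewrite eqxx (IH t u) // orbT.
Qed.

Lemma lexle_nth s t i : size s = size t -> (i < size s)%N ->
  (forall k, (k < i)%N -> nth 0%N s k = nth 0%N t k) ->
  (nth 0%N s i < nth 0%N t i)%N -> lexle s t.
Proof.
elim: s t i => [|x s IH] [|y t] [|i] //= [Hst] Hi Hk Hlt.
- by rewrite Hlt.
- have := Hk 0%N erefl => /= ->; rewrite eqxx (IH t i) ?orbT //.
  by move=> k Hk'; exact: (Hk k.+1).
Qed.

Section M.
Variable n : nat.
Implicit Types a b c : 'X_{1..n}.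
Local Notation sq a := (val (val a)).

Lemma size_sq a : size (sq a) = n. Proof. exact: size_tuple. Qed.

Lemma size_addseq s t : size (addseq s t) = minn (size s) (size t).
Proof. by elim: s t => [|x s IH] [|y t] //=; rewrite IH minnSS. Qed.

Lemma nth_addseq s t k : (k < minn (size s) (size t))%N ->
  nth 0%N (addseq s t) k = (nth 0%N s k + nth 0%N t k)%N.
Proof.
elim: s t k => [|x s IH] [|y t] [|k] //=; rewrite minnSS ltnS => Hk.
exact: IH.
Qed.

Lemma sq_add a b : sq (a + b)%MM = addseq (sq a) (sq b).
Proof.
apply: (@eq_from_nth _ 0%N); first by rewrite size_addseq !size_sq minnn.
move=> k; rewrite size_sq => Hk.
rewrite nth_addseq ?size_sq ?minnn //.
have := mnmDE (Ordinal Hk) a b; rewrite !(mnm_nth 0%N) /=. done.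
Qed.

Lemma mlex_refl a : mlexle a a. Proof. exact: lexle_refl. Qed.
Lemma mlex_trans b a c : mlexle a b -> mlexle b c -> mlexle a c.
Proof. by apply: lexle_trans; rewrite !size_sq. Qed.
Lemma mlex_anti a b : mlexle a b -> mlexle b a -> a = b.
Proof.
move=> H1 H2; apply: val_inj; apply: val_inj; apply: lexle_anti => //.
by rewrite !size_sq.
Qed.
Lemma mlex_addr a b c : mlexle a b -> mlexle (a + c)%MM (b + c)%MM.
Proof. rewrite /mlexle !sq_add; apply: lexle_add; by rewrite !size_sq. Qed.
Lemma mlex_addl a b c : mlexle a b -> mlexle (c + a)%MM (c + b)%MM.
Proof. by rewrite ![(c + _)%MM]addmC; apply: mlex_addr. Qed.
Lemma mlex_add a b c d : mlexle a b -> mlexle c d -> mlexle (a + c)%MM (b + d)%MM.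
Proof. move=> H1 H2; apply: (@mlex_trans (b + c)%MM); [exact: mlex_addr | exact: mlex_addl]. Qed.

Lemma mlex_U (i j : 'I_n) : (i < j)%N -> mlexle U_(j)%MM U_(i)%MM.
Proof.
move=> Hij; apply: (@lexle_nth _ _ i); rewrite ?size_sq //.
- move=> k Hk; have Hkn : (k < n)%N by apply: ltn_trans Hk (ltn_ord i).
  rewrite -!(mnm_nth 0%N _ (Ordinal Hkn)) !mnm1E.
  by apply/eqP; rewrite !eqE /= !(gtn_eqF Hk) ?(gtn_eqF (ltn_trans Hk Hij)).
- rewrite -!(mnm_nth 0%N _ i) !mnm1E eqxx.
  by case: eqP Hij => // ->; rewrite ltnn.
Qed.
End M.

Set Implicit Arguments. Unset Strict Implicit.
Local Open Scope ring_scope.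

Section P.
Variables (R : idomainType) (n : nat).
Implicit Types (f g : {mpoly R[n]}) (a b : 'X_{1..n}).

Definition SB f a := forall e, f@_e != 0 -> mlexle e a.
Definition LB f a c := SB f a /\ f@_a = c.

Lemma top_unique k l a b : mlexle k a -> mlexle l b -> (k + l = a + b)%MM ->
  k = a /\ l = b.
Proof.
move=> Hk Hl E.
have H1 : mlexle (k + l)%MM (a + l)%MM by exact: mlex_addr.
have H2 : mlexle (a + l)%MM (a + b)%MM by exact: mlex_addl.
rewrite E in H1.
have E2 : (a + l = a + b)%MM by exact: mlex_anti.
have El : l = b by exact: (addmI E2).
split=> //; rewrite El in E; exact: (addIm E).
Qed.

Lemma coefM_top f g a b : SB f a -> SB g b -> (f * g)@_(a + b) = f@_a * g@_b.
Proof.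
move=> Hf Hg; rewrite mcoeffM.
have Ha : (mdeg a < (mdeg (a + b)%MM).+1)%N by rewrite mdegD ltnS leq_addr.
have Hb : (mdeg b < (mdeg (a + b)%MM).+1)%N by rewrite mdegD ltnS leq_addl.
pose k0 : 'X_{1..n < (mdeg (a+b)%MM).+1, (mdeg (a+b)%MM).+1} :=
  (BMultinom Ha, BMultinom Hb).
rewrite (bigD1 k0) /=; last by rewrite eqxx.
rewrite big1 ?addr0 // => -[k1 k2] /= /andP[/eqP E Hne].
have [->|nz1] := eqVneq f@_k1 0; first by rewrite mul0r.
have [->|nz2] := eqVneq g@_k2 0; first by rewrite mulr0.
have [E1 E2] := top_unique (Hf _ nz1) (Hg _ nz2) (esym E).
case/eqP: Hne; rewrite /k0; congr (_, _); exact: val_inj.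
Qed.

Lemma LB_mul f g a b c c' : LB f a c -> LB g b c' -> LB (f * g) (a + b)%MM (c * c').
Proof.
move=> [Hf Ef] [Hg Eg]; split; last by rewrite coefM_top // Ef Eg.
move=> e; rewrite -mcoeff_msupp => /msuppM_le /allpairsP [[m1 m2] /= [H1 H2 ->]].
rewrite mcoeff_msupp in H1; rewrite mcoeff_msupp in H2.
exact: mlex_add (Hf _ H1) (Hg _ H2).
Qed.

Lemma LB_1 : LB 1 0%MM 1.
Proof.
split; last by rewrite mcoeff1 eqxx.
move=> e; rewrite mcoeff1; case E: (e == 0%MM); last by rewrite /= eqxx.
by move/eqP: E => -> _; rewrite mlex_refl.
Qed.

Lemma LB_prod (I : Type) (r : seq I) (P : pred I) (F : I -> {mpoly R[n]}) A c :
  (forall i, P i -> LB (F i) (A i) (c i)) ->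
  LB (\prod_(i <- r | P i) F i) (\big[+%MM/0%MM]_(i <- r | P i) A i) (\prod_(i <- r | P i) c i).
Proof.
move=> H; apply: (big_rec3 (fun x y z => LB x y z)); first exact: LB_1.
by move=> i x y z Pi Hx; apply: LB_mul => //; exact: H.
Qed.

Lemma SB_top f a : SB f a -> forall b, mlexle a b -> a != b -> f@_b = 0.
Proof.
move=> Hf b Hab Hne; apply/eqP; apply: contraNT Hne => /Hf Hba.
by apply/eqP; exact: mlex_anti.
Qed.

Lemma SB_le f a b : SB f a -> mlexle a b -> SB f b.
Proof. by move=> Hf Hab e /Hf He; exact: mlex_trans He Hab. Qed.


Lemma mcoef_sum (J : finType) (c : J -> R) (F : J -> {mpoly R[n]}) e :
  (\sum_l c l *: F l)@_e = \sum_l c l * (F l)@_e.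
Proof. by rewrite raddf_sum; apply: eq_bigr => l _; exact: mcoeffZ. Qed.

Lemma SB_sum (J : finType) (c : J -> R) (F : J -> {mpoly R[n]}) a :
  (forall l, SB (F l) a) -> SB (\sum_l c l *: F l) a.
Proof.
move=> H e; rewrite mcoef_sum => Hne.
have [l _ Hl] : exists2 l, true & (F l)@_e != 0.
  apply/exists_inP; apply: contraNT Hne; rewrite negb_exists_in => /forall_inP Hall.
  by apply/eqP; apply: big1 => l _; move: (Hall l isT) => /negPn/eqP ->; rewrite mulr0.
exact: H Hl.
Qed.

Lemma coef_Xderiv (i : 'I_n) f e : (mderiv i f * 'X_i)@_e = f@_e *+ e i.
Proof.
case Ei: (e i) => [|k].
- rewrite mulr0n; apply/eqP; rewrite mcoeff_eq0 (perm_mem (msuppMX _ _)).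
  apply/mapP => -[m' _ E]; move: Ei; rewrite E mnmDE mnm1E eqxx //.
- have Hle : (U_(i) <= e)%MM by rewrite lep1mP Ei.
  have E : e = (U_(i) + (e - U_(i)))%MM by rewrite addmC submK.
  rewrite {1}E mcoeffMX mcoeff_deriv submK // mnmBE mnm1E eqxx Ei subn1 //.
Qed.

Lemma SB_Xderiv (i : 'I_n) f a : SB f a -> SB (mderiv i f * 'X_i) a.
Proof.
move=> H e; rewrite coef_Xderiv => Hne; apply: H.
by apply: contraNneq Hne => ->; rewrite mul0rn.
Qed.

Definition lm (i l : 'I_n) : 'X_{1..n} := if (i < l)%N then U_(i)%MM else U_(l)%MM.
Definition lc (i l : 'I_n) : R := if (i < l)%N then 1 else -1.

Lemma LB_lin (i l : 'I_n) : i != l -> LB ('X_i - 'X_l) (lm i l) (lc i l).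
Proof.
move=> Hil; have Hli : l != i by rewrite eq_sym.
rewrite /LB /SB /lm /lc; case: ltnP => Hlt.
- split.
  + move=> e; rewrite mcoeffB !mcoeffX.
    case: (eqVneq U_(i)%MM e) => [<-|_]; first by rewrite mlex_refl.
    case: (eqVneq U_(l)%MM e) => [<-|_]; first by move=> _; exact: mlex_U.
    by rewrite subrr eqxx.
  + by rewrite mcoeffB !mcoeffX eqxx eq_mnm1 (negbTE Hli) subr0.
- have Hlt' : (l < i)%N by rewrite ltn_neqAle Hlt andbT; apply: contra Hli => /eqP E; apply/eqP/val_inj.
  split.
  + move=> e; rewrite mcoeffB !mcoeffX.
    case: (eqVneq U_(l)%MM e) => [<-|_]; first by rewrite mlex_refl.
    case: (eqVneq U_(i)%MM e) => [<-|_]; first by move=> _; exact: mlex_U.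
    by rewrite subrr eqxx.
  + by rewrite mcoeffB !mcoeffX eqxx eq_mnm1 (negbTE Hil) sub0r.
Qed.

Lemma lc_neq0 (i l : 'I_n) : lc i l != 0.
Proof. by rewrite /lc; case: ifP => _; rewrite ?oppr_eq0 oner_eq0. Qed.


Lemma LB_X (i : 'I_n) : LB 'X_i U_(i)%MM 1.
Proof.
split; last by rewrite mcoeffX eqxx.
move=> e; rewrite mcoeffX; case E: (U_(i)%MM == e); last by rewrite /= eqxx.
by move/eqP: E => <- _; rewrite mlex_refl.
Qed.

End P.

Section Main.
Variables (p q n : nat) (m : 'I_n -> nat).
Hypothesis hp : prime p.
Hypothesis hqp : ~~ (p %| q)%N.
Variable I : 'I_n -> {mpoly 'F_p[n]}.
Hypothesis hKZ : is_KZ_solution q m I.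

Lemma q_neq0 : (q%:R : 'F_p) != 0.
Proof. by rewrite -(dvdn_pcharf (pchar_Fp hp)). Qed.

Lemma qfrac_neq0 : (q%:R : {fraction {mpoly 'F_p[n]}}) != 0.
Proof.
rewrite -(rmorph_nat (@FracField.tofrac _)) tofrac_eq0.
apply: contra q_neq0 => /eqP H.
by have := congr1 (mcoeff 0%MM) H; rewrite mcoeffMn mcoeff1 eqxx mcoeff0 => ->.
Qed.

Lemma key_ident (i k : 'I_n) :
 ((mderiv i (I k) * 'X_i) * \prod_(l | l != i) ('X_i - 'X_l)) *+ q
 = \sum_(j | j != i) mx_act (Omega p m i j) I k *
     ('X_i * \prod_(l | (l != i) && (l != j)) ('X_i - 'X_l)).
Proof.
apply/eqP; rewrite -tofrac_eq; apply/eqP.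
rewrite tofracMn !tofracM (hKZ.1 i k) rmorph_sum /=.
rewrite -[_ *+ q]mulr_natl !mulrA mulfV ?qfrac_neq0 // mul1r !mulr_suml.
apply: eq_bigr => j Hj.
rewrite (bigD1 j Hj) /= !tofracM.
have HD : tofrac ('X_i - 'X_j : {mpoly 'F_p[n]}) != 0.
  rewrite tofrac_eq0; apply/eqP => H0.
  have Hij : i != j by rewrite eq_sym.
  have [_ H] := LB_lin 'F_p Hij.
  by move: (lc_neq0 'F_p i j); rewrite -H H0 mcoeff0 eqxx.
by rewrite -!mulrA; congr (_ * _); rewrite mulrCA mulKf.
Qed.

Variables (C : 'cV['F_p]_n) (d : 'X_{1..n}).
Hypothesis hlead : is_id_leading_term I C d.

Lemma SB_I k : SB (I k) d.
Proof. by move=> e He; exact: hlead.2.2 e k He. Qed.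

Lemma SB_A i j k : SB (mx_act (Omega p m i j) I k) d.
Proof. by apply: SB_sum => l; exact: SB_I. Qed.

Lemma coef_A i j k : (mx_act (Omega p m i j) I k)@_d = (Omega p m i j *m C) k 0.
Proof.
rewrite /mx_act mcoef_sum mxE; apply: eq_bigr => l _.
by rewrite hlead.2.1.
Qed.

Lemma key_coef (i k : 'I_n) :
  let mu := (\big[+%MM/0%MM]_(l | l != i) lm i l)%MM in
  let s := \prod_(l | l != i) lc 'F_p i l in
  ((C k 0 *+ d i) * s) *+ q =
  \sum_(j | j != i) (if (i < j)%N then (Omega p m i j *m C) k 0 * s else 0).
Proof.
move=> mu s.
have LBP : LB (\prod_(l | l != i) ('X_i - 'X_l)) mu s.
  by apply: LB_prod => l Hl; apply: LB_lin; rewrite eq_sym.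
have := congr1 (mcoeff (d + mu)%MM) (key_ident i k).
rewrite mcoeffMn coefM_top; last exact: LBP.1; last by apply: SB_Xderiv; exact: SB_I.
rewrite coef_Xderiv LBP.2 -hlead.2.1 => ->.
rewrite raddf_sum; apply: eq_bigr => j Hj /=.
have Hij : i != j by rewrite eq_sym.
have LBl : forall l, (l != i) && (l != j) -> LB ('X_i - 'X_l) (lm i l) (lc 'F_p i l).
  by move=> l /andP[Hl _]; apply: LB_lin; rewrite eq_sym.
have LBQ := LB_mul (LB_X 'F_p i) (LB_prod (index_enum 'I_n) LBl).
have Emu : mu = (lm i j + \big[+%MM/0%MM]_(l | (l != i) && (l != j)) lm i l)%MM.
  by rewrite /mu (bigD1 j Hj).
have Es : s = lc 'F_p i j * \prod_(l | (l != i) && (l != j)) lc 'F_p i l.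
  by rewrite /s (bigD1 j Hj).
rewrite Emu Es.
case: ifP => Hlt.
- rewrite /lm /lc Hlt coefM_top; [|exact: SB_A|exact: LBQ.1].
  by rewrite coef_A LBQ.2.
- have Hji : (j < i)%N by rewrite ltn_neqAle leqNgt Hlt andbT; apply: contra Hj => /eqP E; apply/eqP/val_inj.
  rewrite /lm Hlt.
  have Hle : mlexle (U_(i) + \big[+%MM/0%MM]_(l | (l != i) && (l != j)) lm i l)%MM
                    (U_(j) + \big[+%MM/0%MM]_(l | (l != i) && (l != j)) lm i l)%MM.
    by apply: mlex_addr; exact: mlex_U.
  have Hne : (U_(i) + \big[+%MM/0%MM]_(l | (l != i) && (l != j)) lm i l)%MM !=
             (U_(j) + \big[+%MM/0%MM]_(l | (l != i) && (l != j)) lm i l)%MM.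
    by rewrite eqm_add2r eq_mnm1.
  rewrite coefM_top; [|exact: SB_A|exact: SB_le LBQ.1 Hle].
  by rewrite (SB_top LBQ.1 Hle Hne) mulr0.
Qed.

Lemma key_final (i k : 'I_n) :
  (q * d i)%:R * C k 0 = \sum_(j : 'I_n | (i < j)%N) (Omega p m i j *m C) k 0.
Proof.
have := key_coef i k => /=.
set s := \prod_(l | l != i) lc 'F_p i l.
have Hs : s != 0 by apply/prodf_neq0 => l _; exact: lc_neq0.
rewrite -big_mkcondr /= -mulr_suml.
have -> : \sum_(j : 'I_n | (j != i) && (i < j)%N) (Omega p m i j *m C) k 0 =
          \sum_(j : 'I_n | (i < j)%N) (Omega p m i j *m C) k 0.
  apply: eq_bigl => j; case: (ltnP i j) => H; rewrite ?andbT ?andbF //.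
  by apply/eqP => E'; move: H; rewrite E' ltnn.
move=> E; apply: (mulIf Hs); rewrite -E.
by rewrite -mulr_natl natrM -mulr_natl; ring.
Qed.
End Main.

Theorem lemma5p1 (p q n : nat) (m : 'I_n -> nat)
  (hp : prime p) (hq : prime q) (hn2 : (2 <= n)%N) (hpn : (n < p)%N)
  (hpq : (q < p)%N)
  (hm : forall i, (0 < m i)%N /\ (m i < q)%N)
  (I : 'I_n -> {mpoly 'F_p[n]})
  (hI0 : exists k, I k != 0)
  (hKZ : is_KZ_solution q m I)
  (C : 'cV['F_p]_n) (d : 'X_{1..n})
  (hlead : is_id_leading_term I C d) :
  \sum_(j < n) (m j)%:R * C j 0 = 0
  /\ (forall j : 'I_n, (j < n.-1)%N ->
        \sum_(l < n | (j < l)%N) (Omega p m j l *m C) = (q * d j)%:R *: C)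
  /\ (forall k : 'I_n, val k = n.-1 -> d k %% p = 0)%N.
Proof.
have hqp : ~~ (p %| q)%N by rewrite gtnNdvd // prime_gt0.
split; last split.
- have E := congr1 (mcoeff d) hKZ.2; rewrite mcoef_sum mcoeff0 in E; rewrite -[RHS]E.
  by apply: eq_bigr => j _; rewrite hlead.2.1.
- move=> j _; apply/matrixP => k z; rewrite (ord1 z) summxE mxE.
  by rewrite (key_final hp hqp hKZ hlead).
- move=> k Hk.
  have H0 : forall k', (q * d k)%:R * C k' 0 = 0.
    move=> k'; rewrite (key_final hp hqp hKZ hlead) big_pred0 // => j.
    apply/negbTE; rewrite -leqNgt Hk -ltnS prednK ?ltn_ord //.
    by apply: leq_ltn_trans (ltn_ord j).
  have [k' Hk'] : exists k', C k' 0 != 0.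
    apply/existsP; apply: contraNT hlead.1 => /existsPn Hall.
    apply/eqP/matrixP => a b; rewrite (ord1 b) mxE.
    by move: (Hall a) => /negPn/eqP.
  have : (q * d k)%:R == 0 :> 'F_p.
    by move: (H0 k') => /eqP; rewrite mulf_eq0 (negbTE Hk') orbF.
  rewrite -(dvdn_pcharf (pchar_Fp hp)) Euclid_dvdM // (negbTE hqp) /=.
  by move/eqP.
Qed.
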